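(* Let $\Theta$ be the class of all connected graphs $G$ with $\mathrm{ldim}_f(G)=\frac{|V(G)|}{2}$. If $G_1,G_2\in\Theta$, then the join $G_1+G_2$ belongs to $\Theta$.
   Context: All graphs are finite, simple and connected; $d(x,y)$ is the shortest-path distance. For an edge $uv$, $L(uv)=\{x\in V(G): d(u,x)\neq d(v,x)\}$. A function $f:V(G)\to[0,1]$ is a local resolving function of $G$ if $\sum_{x\in L(uv)}f(x)\geq 1$ for every edge $uv$; $\mathrm{ldim}_f(G)$ is the minimum of $\sum_{v\in V(G)}f(v)$ over all local resolving functions. The join $G_1+G_2$ is the disjoint union of $G_1$ and $G_2$ together with all edges joining a vertex of $G_1$ to a vertex of $G_2$. *)

(* Defs.v *)
From HB Require Import structures.
From mathcomp Require Import all_boot all_order all_algebra.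
Set Implicit Arguments. Unset Strict Implicit. Unset Printing Implicit Defensive.
Import Order.TTheory GRing.Theory Num.Theory.

Definition simple_graph (T : finType) (e : rel T) : Prop :=
  symmetric e /\ irreflexive e.

Definition connected_graph (T : finType) (e : rel T) : Prop :=
  forall x y : T, connect e x y.

Fixpoint ball (T : finType) (e : rel T) (n : nat) (x : T) : {set T} :=
  match n with
  | 0 => [set x]
  | n'.+1 => ball e n' x :|: [set y | [exists z in ball e n' x, e z y]]
  end.

(* shortest-path distance d(x,y): the number of radii n < #|T| for which y is
   not yet in the ball of radius n around x, i.e. the least n with
   y \in ball e n x (for a connected graph, such n <= #|T| - 1 exists). *)
Definition dist (T : finType) (e : rel T) (x y : T) : nat :=
  \sum_(n < #|T|) (y \notin ball e n x).

Definition Lset (T : finType) (e : rel T) (u v : T) : {set T} :=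
  [set x | dist e u x != dist e v x].

Local Open Scope ring_scope.

Definition local_resolving (R : realFieldType) (T : finType) (e : rel T)
  (f : T -> R) : Prop :=
  (forall x, 0 <= f x <= 1) /\
  (forall u v, e u v -> 1 <= \sum_(x in Lset e u v) f x).

Definition is_ldimf (R : realFieldType) (T : finType) (e : rel T) (r : R) : Prop :=
  (exists f : T -> R, local_resolving e f /\ \sum_(x : T) f x = r) /\
  (forall f : T -> R, local_resolving e f -> r <= \sum_(x : T) f x).

Definition in_Theta (R : realFieldType) (T : finType) (e : rel T) : Prop :=
  connected_graph e /\ is_ldimf (R := R) e (#|T|%:R / 2%:R).

Definition join_rel (T1 T2 : finType) (e1 : rel T1) (e2 : rel T2) : rel (T1 + T2) :=
  fun a b =>
    match a, b with
    | inl x, inl y => e1 x y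
    | inr x, inr y => e2 x y
    | _, _ => true
    end.

(* Main.v *)
Require Import Defs.
From HB Require Import structures.
From mathcomp Require Import all_boot all_order all_algebra.
From mathcomp Require Import ring lra.
Set Implicit Arguments. Unset Strict Implicit. Unset Printing Implicit Defensive.
Import Order.TTheory GRing.Theory Num.Theory.

Section Aux.
Variable T : finType.
Variable e : rel T.

Lemma ball_self n x : x \in ball e n x.
Proof. elim: n => [|n IH] /=; first by rewrite inE. by rewrite inE IH. Qed.

Lemma ball_monoS m n x : (m <= n)%N -> ball e m x \subset ball e n x.
Proof.
elim: n => [|n IH]; first by rewrite leqn0 => /eqP ->.
rewrite leq_eqVlt => /orP [/eqP -> //| ]; rewrite ltnS => /IH H.
apply: subset_trans H _ => /=; exact: subsetUl.
Qed.

Lemma in_ball1 x y : (y \in ball e 1 x) = (y == x) || e x y.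
Proof.
rewrite /= !inE; congr (_ || _); apply/existsP/idP => [[z /andP [] ]|H].
  by rewrite inE => /eqP ->.
by exists x; rewrite inE eqxx.
Qed.

Lemma ballS_eq u v : ball e 1 u = ball e 1 v -> forall n, ball e n.+1 u = ball e n.+1 v.
Proof.
move=> H; elim=> [//|n IH].
change (ball e n.+1 u :|: [set y | [exists z in ball e n.+1 u, e z y]] =
  ball e n.+1 v :|: [set y | [exists z in ball e n.+1 v, e z y]]).
by rewrite IH.
Qed.

Local Arguments ball : simpl never.

Lemma dist_self x : dist e x x = 0%N.
Proof. by apply: big1 => n _; rewrite ball_self. Qed.

Lemma dist_pos x y : x != y -> (0 < dist e y x)%N.
Proof.
move=> nxy; have H : (0 < #|T|)%N by apply/card_gt0P; exists x.
rewrite /dist (bigD1 (Ordinal H)) //= inE (negbTE nxy) //.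
Qed.

Lemma dist_eq_twin u v x : ball e 1 u = ball e 1 v -> x != u -> x != v ->
  dist e u x = dist e v x.
Proof.
move=> H xu xv; apply: eq_bigr => [[[|n] Hn]] _ /=.
  by rewrite !inE xu xv.
by rewrite -/(ball e n.+1 u) -/(ball e n.+1 v) (ballS_eq H).
Qed.

Lemma dist1 u x : x != u -> (1 < #|T|)%N -> e u x = (dist e u x == 1%N).
Proof.
move=> xu; rewrite /dist; move: #|T| => k.
case: k => [|[|k]] // _.
rewrite big_ord_recl big_ord_recl /= inE xu /=.
have := in_ball1 u x; rewrite (negbTE xu) /= => <-.
case: (boolP (x \in ball e 1 u)) => Hx /=.
  rewrite big1 // => i _; apply/eqP; rewrite eqb0 negbK.
  by apply: (subsetP (ball_monoS _ _ )) Hx.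
by rewrite add1n eqSS.
Qed.

Lemma memL u v : e u v -> u != v -> (u \in Lset e u v) && (v \in Lset e u v).
Proof.
move=> _ nuv; rewrite !inE !dist_self.
by rewrite eq_sym -!lt0n !dist_pos // eq_sym.
Qed.

Lemma twin_of_L a b : simple_graph e -> e a b ->
  Lset e a b \subset [set a; b] -> ball e 1 a = ball e 1 b.
Proof.
move=> [sym irr] eab HL.
have nab : a != b by apply: contraTneq eab => ->; rewrite irr.
have card2 : (1 < #|T|)%N.
  rewrite (cardD1 a) inE /= ltnS; apply/card_gt0P; exists b.
  by rewrite !inE eq_sym nab.
apply/setP => x; rewrite !in_ball1.
case: (eqVneq x a) => [->|xa]; first by rewrite [e b a]sym eab orbT.
case: (eqVneq x b) => [->|xb]; first by rewrite eab.
rewrite /= (dist1 xa card2) (dist1 xb card2).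
have : x \notin Lset e a b.
  by apply/negP => /(subsetP HL); rewrite !inE (negbTE xa) (negbTE xb).
by rewrite inE negbK => /eqP ->.
Qed.

End Aux.

Local Arguments ball : simpl never.
Local Open Scope ring_scope.

Section Real.
Variable R : realFieldType.
Variable T : finType.
Variable e : rel T.

Lemma sum_subset_le (f : T -> R) (A B : {set T}) :
  (forall x, x \in B -> 0 <= f x) -> A \subset B ->
  \sum_(x in A) f x <= \sum_(x in B) f x.
Proof.
move=> f0 AB; rewrite (big_setID (A := B) A) /= (setIidPr AB) lerDl.
by apply: sumr_ge0 => x; rewrite inE => /andP [_ /f0].
Qed.

Lemma sum_pair (f : T -> R) a b : a != b ->
  \sum_(x in [set a; b]) f x = f a + f b.
Proof.
move=> nab; by rewrite big_setU1 ?big_set1 ?inE.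
Qed.

Lemma pair_le (f : T -> R) (A : {set T}) a b : (forall x, 0 <= f x) ->
  a \in A -> b \in A -> a != b -> f a + f b <= \sum_(x in A) f x.
Proof.
move=> f0 aA bA nab; rewrite -sum_pair //; apply: sum_subset_le => [x _ //|].
by apply/subsetP => x; rewrite !inE => /orP [] /eqP ->.
Qed.

Lemma twin_pair (f : T -> R) u w : simple_graph e -> local_resolving e f ->
  w != u -> ball e 1 u = ball e 1 w -> 1 <= f w + f u.
Proof.
move=> [sym irr] [fb fL] nwu H.
have ewu : e w u.
  have := ball_self e 1 u; rewrite H in_ball1 => /orP [/eqP E|//].
  by rewrite E eqxx in nwu.
apply: le_trans (fL _ _ ewu) _.
rewrite -sum_pair //; apply: sum_subset_le.
  by move=> x _; case/andP: (fb x).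
apply/subsetP => x; rewrite !inE; apply: contraR.
rewrite negb_or => /andP [xw xu].
by rewrite (dist_eq_twin H).
Qed.


Lemma twins_lower (f : T -> R) : simple_graph e -> local_resolving e f ->
  (forall w, exists u, u != w /\ ball e 1 u = ball e 1 w) ->
  #|T|%:R / 2%:R <= \sum_(x : T) f x.
Proof.
move=> sg lr tw.
pose P w u := (u != w) && (ball e 1 u == ball e 1 w).
pose t w := odflt w [pick u | P w u].
have tP w : t w != w /\ ball e 1 (t w) = ball e 1 w.
  rewrite /t; case: pickP => [u /andP [? /eqP ?]|H] //=.
  case: (tw w) => u [nuw bu]; by move: (H u); rewrite /P nuw bu eqxx.
pose g x := f x - 2^-1.
have gpair a b : a != b -> ball e 1 a = ball e 1 b -> 0 <= g a + g b.
  move=> nab hab; have := twin_pair sg lr nab (esym hab); rewrite /g; lra.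
have sumE : \sum_(x : T) f x = \sum_(x : T) g x + #|T|%:R / 2%:R.
  by rewrite /g sumrB sumr_const -mulr_natr; field.
pose N := [set x | g x < 0].
have injt : {in N &, injective t}.
  move=> a b; rewrite !inE => ga gb tab; apply/eqP/negPn/negP => nab.
  have hb : ball e 1 a = ball e 1 b by rewrite -(tP a).2 tab (tP b).2.
  have := gpair a b nab hb; lra.
have gnn x : x \in ~: N -> 0 <= g x by rewrite !inE ltNge negbK.
have imsub : t @: N \subset ~: N.
  apply/subsetP => y /imsetP [a aN ->]; rewrite !inE ltNge negbK.
  rewrite inE in aN; have := gpair _ _ (tP a).1 (tP a).2; lra.
have h1 : \sum_(i in t @: N) g i <= \sum_(i | i \notin N) g i.
  rewrite [X in _ <= X](eq_bigl (fun i => i \in ~: N)); last by move=> i; rewrite in_setC.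
  exact: sum_subset_le gnn imsub.
have h2 : \sum_(i in t @: N) g i = \sum_(i in N) g (t i) := big_imset _ injt.
have h3 : 0 <= \sum_(i in N) g (t i) + \sum_(i in N) g i.
  rewrite -big_split; apply: sumr_ge0 => i _; exact: gpair _ _ (tP i).1 (tP i).2.
rewrite sumE (bigID (fun x => x \in N)) /=.
lra.
Qed.


Lemma theta_twins : simple_graph e -> is_ldimf e (#|T|%:R / 2%:R : R) ->
  forall v, exists u, u != v /\ ball e 1 u = ball e 1 v.
Proof.
move=> sg [_ Hmin] v.
case: (boolP [exists u, (u != v) && (ball e 1 u == ball e 1 v)]) =>
  [/existsP [u /andP [a /eqP b]]|Hno]; first by exists u.
exfalso.
have Hno' u : u != v -> ball e 1 u != ball e 1 v.
  move=> nuv; apply/negP => /eqP E; move/negP: Hno; apply; apply/existsP.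
  by exists u; rewrite nuv E eqxx.
pose f x : R := if x == v then 0 else 2^-1.
have f0 x : 0 <= f x by rewrite /f; case: (x == v) => //; rewrite invr_ge0 ler0n.
have fv x : x != v -> f x = 2^-1 by rewrite /f => /negbTE ->.
have lr : local_resolving e f.
  split.
    move=> x; rewrite /f; case: (x == v); apply/andP; split; lra.
  move=> a b eab.
  have nab : a != b by apply: contraTneq eab => ->; rewrite sg.2.
  have /andP [aL bL] := memL eab nab.
  have ex : (a == v) || (b == v) ->
      exists2 w, w \in Lset e a b & (w != a) && (w != b).
    move=> hv.
    case: (boolP [exists w in Lset e a b, (w != a) && (w != b)]) =>
      [/exists_inP [w ? ?]|H]; first by exists w.
    exfalso.
    have sub : Lset e a b \subset [set a; b].
      apply/subsetP => w wL; rewrite !inE; apply/negPn/negP; rewrite negb_or => nw.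
      by move/negP: H; apply; apply/exists_inP; exists w.
    have Hb := twin_of_L sg eab sub.
    case/orP: hv => /eqP E.
      have nb : b != v by rewrite -E eq_sym.
      by move: (Hno' b nb); rewrite -E Hb eqxx.
    have na : a != v by rewrite -E.
    by move: (Hno' a na); rewrite -E Hb eqxx.
  case: (eqVneq a v) => [av|av]; case: (eqVneq b v) => [bv|bv].
  - by move: nab; rewrite av bv eqxx.
  - have hv : (a == v) || (b == v) by rewrite av eqxx.
    have [w wL /andP [wa wb]] := ex hv.
    have wv : w != v by rewrite -av.
    have bw : b != w by rewrite eq_sym.
    have := pair_le f0 bL wL bw.
    rewrite (fv _ bv) (fv _ wv); lra.
  - have hv : (a == v) || (b == v) by rewrite bv eqxx orbT.
    have [w wL /andP [wa wb]] := ex hv.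
    have wv : w != v by rewrite -bv.
    have aw : a != w by rewrite eq_sym.
    have := pair_le f0 aL wL aw.
    rewrite (fv _ av) (fv _ wv); lra.
  - have := pair_le f0 aL bL nab.
    rewrite (fv _ av) (fv _ bv); lra.
have := Hmin f lr.
rewrite (bigD1 v) //= {1}/f eqxx add0r.
rewrite (eq_bigr (fun _ => 2^-1)); last by move=> i /fv.
rewrite sumr_const cardC1 -mulr_natr.
have hT : #|T| = (#|T|.-1).+1 by rewrite prednK //; apply/card_gt0P; exists v.
rewrite [in X in X <= _]hT -natr1.
lra.
Qed.

End Real.

Section Join.
Variables (T1 T2 : finType) (e1 : rel T1) (e2 : rel T2).
Local Notation J := (join_rel e1 e2).

Lemma join_simple : simple_graph e1 -> simple_graph e2 -> simple_graph J.
Proof.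
move=> [s1 i1] [s2 i2]; split.
  by case=> x [] y //=; rewrite ?s1 ?s2.
by case=> x /=; rewrite ?i1 ?i2.
Qed.

Lemma join_twin1 u v : ball e1 1 u = ball e1 1 v -> ball J 1 (inl u) = ball J 1 (inl v).
Proof.
move=> H; apply/setP => [[y|y]]; rewrite !in_ball1 //=.
by have := congr1 (fun A : {set _} => y \in A) H; rewrite /= !in_ball1.
Qed.

Lemma join_twin2 u v : ball e2 1 u = ball e2 1 v -> ball J 1 (inr u) = ball J 1 (inr v).
Proof.
move=> H; apply/setP => [[y|y]]; rewrite !in_ball1 //=.
by have := congr1 (fun A : {set _} => y \in A) H; rewrite /= !in_ball1.
Qed.

Lemma lift_connect1 x y : connect e1 x y -> connect J (inl x) (inl y).
Proof.
move/connectP=> [p pth ->]; elim: p x pth => [|z p IH] x /=; first by rewrite connect0.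
move/andP=> [exz pz]; apply: connect_trans (connect1 _) (IH _ pz); exact: exz.
Qed.

Lemma lift_connect2 x y : connect e2 x y -> connect J (inr x) (inr y).
Proof.
move/connectP=> [p pth ->]; elim: p x pth => [|z p IH] x /=; first by rewrite connect0.
move/andP=> [exz pz]; apply: connect_trans (connect1 _) (IH _ pz); exact: exz.
Qed.

Lemma join_connected : connected_graph e1 -> connected_graph e2 -> connected_graph J.
Proof.
move=> c1 c2 [x|x] [y|y].
- exact: lift_connect1.
- exact: connect1.
- exact: connect1.
- exact: lift_connect2.
Qed.

End Join.

Theorem corollary2p4 (R : realFieldType) (T1 T2 : finType)
  (e1 : rel T1) (e2 : rel T2) :
  simple_graph e1 -> simple_graph e2 ->
  in_Theta R e1 -> in_Theta R e2 ->
  in_Theta R (join_rel e1 e2).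
Proof.
move=> s1 s2 [c1 l1] [c2 l2].
have sJ := join_simple s1 s2.
have t1 := theta_twins s1 l1.
have t2 := theta_twins s2 l2.
split; first exact: join_connected.
have h12 : 0 <= (2 : R)^-1 <= 1 by apply/andP; split; lra.
split.
  exists (fun _ => 2^-1); split.
    split; first by move=> _.
    move=> a b eab.
    have nab : a != b by apply: contraTneq eab => ->; rewrite sJ.2.
    have /andP [aL bL] := memL eab nab.
    have f0 : forall x : T1 + T2, 0 <= (2 : R)^-1 by move=> _; case/andP: h12.
    have := pair_le f0 aL bL nab; clear f0 t1 t2; lra.
  by rewrite sumr_const -[_ *+ _]mulr_natr mulrC.
move=> f lr; apply: (twins_lower sJ lr).
case=> [v|v].
  have [u [nuv bu]] := t1 v.
  by exists (inl u); split; [|exact: join_twin1].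
have [u [nuv bu]] := t2 v.
by exists (inr u); split; [|exact: join_twin2].
Qed.
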